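(* Let $\mathscr A=\{0,1,2\}$, and let $\mu$ be the inhomogeneous multinomial measure on $\partial\mathscr A^\ast=\mathscr A^{\mathbb N}$ with parameters $a_1,a_2,a_3,b_1,b_2,b_3\in(0,1)$, $\sum a_i=\sum b_i=1$, and a sequence $(T_k)$ (integers, $T_1=1$, strictly increasing, $T_{k+1}/T_k\to\infty$). Fix $q\in\mathbb R$. Then there exist a Borel probability measure $\nu$ on $\partial\mathscr A^\ast$ and a strictly increasing sequence of integers $(n_k)_{k\ge1}$ such that (i) for every $n\ge1$ and every $w\in\mathscr A^n$, $\nu(w)\le\mu(w)^q\,3^{-n\underline\tau(q)}$; (ii) for every $\varepsilon>0$ there is $k_0$ such that for all $k\ge k_0$ and all $w\in\mathscr A^{n_k}$, $\nu(w)\le\mu(w)^q\,3^{-n_k(\tau(q)-\varepsilon)}$.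
   Context: The inhomogeneous multinomial measure: for $w=\varepsilon_1\cdots\varepsilon_n\in\mathscr A^n$, $\mu(w)=\mu([w])=\prod_{j=1}^np_j$, where $p_j=a_{\varepsilon_j+1}$ if $T_{2k-1}\le j<T_{2k}$ for some $k$, and $p_j=b_{\varepsilon_j+1}$ if $T_{2k}\le j<T_{2k+1}$ for some $k$; $[w]$ denotes the set of infinite words beginning with $w$, and $\nu(w)=\nu([w])$. Define $\tau_n(q)$ by $\sum_{w\in\mathscr A^n}\mu(w)^q=3^{n\tau_n(q)}$, and $\tau(q)=\limsup_{n\to\infty}\tau_n(q)$, $\underline\tau(q)=\liminf_{n\to\infty}\tau_n(q)$. *)

(* Defs.v *)
From Stdlib Require Import Reals Lra Lia List ClassicalEpsilon.
Import ListNotations.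
Open Scope R_scope.

(* Alphabet A = {0,1,2}; finite words are lists of naturals with entries < 3. *)
Definition is_word (w : list nat) : Prop := Forall (fun e => (e < 3)%nat) w.

Fixpoint words (n : nat) : list (list nat) :=
  match n with
  | O => [ [] ]
  | S m => flat_map (fun e => map (cons e) (words m)) [0%nat; 1%nat; 2%nat]
  end.

(* Position j (1-based) lies in an "a-phase": T_{2k-1} <= j < T_{2k} for some k >= 1. *)
Definition in_a_phase (T : nat -> nat) (j : nat) : Prop :=
  exists k, (1 <= k)%nat /\ (T (2 * k - 1) <= j < T (2 * k))%nat.

(* p_j for letter e: a_{e+1} in an a-phase, b_{e+1} otherwise
   (i.e. T_{2k} <= j < T_{2k+1}, since T_1 = 1 and T is increasing). *)
Definition pj (a b : nat -> R) (T : nat -> nat) (j e : nat) : R :=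
  if excluded_middle_informative (in_a_phase T j) then a (S e) else b (S e).

Fixpoint mu_from (a b : nat -> R) (T : nat -> nat) (j : nat) (w : list nat) : R :=
  match w with
  | [] => 1
  | e :: w' => pj a b T j e * mu_from a b T (S j) w'
  end.

Definition mu (a b : nat -> R) (T : nat -> nat) (w : list nat) : R := mu_from a b T 1 w.

Definition sumR (l : list R) : R := fold_right Rplus 0 l.

Definition tau_n (a b : nat -> R) (T : nat -> nat) (q : R) (n : nat) : R :=
  ln (sumR (map (fun w => Rpower (mu a b T w) q) (words n))) / (INR n * ln 3).

Definition is_limsup (u : nat -> R) (l : R) : Prop :=
  forall eps, eps > 0 ->
    (exists N, forall n, (n >= N)%nat -> u n < l + eps) /\
    (forall N, exists n, (n >= N)%nat /\ u n > l - eps).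

Definition is_liminf (u : nat -> R) (l : R) : Prop :=
  forall eps, eps > 0 ->
    (exists N, forall n, (n >= N)%nat -> u n > l - eps) /\
    (forall N, exists n, (n >= N)%nat /\ u n < l + eps).

(* A Borel probability measure on A^N, given through its values on cylinders [w]
   (Kolmogorov / Caratheodory: these are in bijection with Borel probability measures). *)
Definition cyl_prob_measure (nu : list nat -> R) : Prop :=
  nu [] = 1 /\
  (forall w, is_word w -> 0 <= nu w) /\
  (forall w, is_word w -> nu w = nu (w ++ [0%nat]) + nu (w ++ [1%nat]) + nu (w ++ [2%nat])).

(* Main.v *)
Require Import Defs.
From Stdlib Require Import Reals List Lra Lia ClassicalEpsilon.
Import ListNotations.
Open Scope R_scope.
Import ListNotations.

Definition sj a b T q j := Rpower (pj a b T j 0) q + Rpower (pj a b T j 1) q + Rpower (pj a b T j 2) q.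

Fixpoint nu_from a b T q j (w : list nat) : R := match w with
 | [] => 1
 | e :: w' => Rpower (pj a b T j e) q / sj a b T q j * nu_from a b T q (S j) w' end.

Fixpoint Pfrom a b T q j (n : nat) : R := match n with
 | O => 1 | S n' => sj a b T q j * Pfrom a b T q (S j) n' end.

Fixpoint Lfrom a b T q j (n : nat) : R := match n with
 | O => 0 | S n' => ln (sj a b T q j) + Lfrom a b T q (S j) n' end.

Lemma Rpower_pos x y : 0 < Rpower x y.
Proof. unfold Rpower; apply exp_pos. Qed.

Lemma sj_pos a b T q j : 0 < sj a b T q j.
Proof. unfold sj. pose proof (Rpower_pos (pj a b T j 0) q).
 pose proof (Rpower_pos (pj a b T j 1) q). pose proof (Rpower_pos (pj a b T j 2) q). lra. Qed.

Lemma nu_nonneg a b T q w : forall j, 0 <= nu_from a b T q j w.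
Proof. induction w as [|e w IH]; intro j; simpl. lra.
 apply Rmult_le_pos; [|apply IH]. left. unfold Rdiv. apply Rmult_lt_0_compat.
 apply Rpower_pos. apply Rinv_0_lt_compat, sj_pos. Qed.

Lemma nu_add a b T q w : forall j, nu_from a b T q j w =
  nu_from a b T q j (w ++ [0%nat]) + nu_from a b T q j (w ++ [1%nat]) + nu_from a b T q j (w ++ [2%nat]).
Proof. induction w as [|e w IH]; intro j; simpl.
 - pose proof (sj_pos a b T q j). unfold sj in *. field. lra.
 - rewrite (IH (S j)). ring. Qed.

Lemma Pfrom_pos a b T q n : forall j, 0 < Pfrom a b T q j n.
Proof. induction n; intro j; simpl. lra. apply Rmult_lt_0_compat; [apply sj_pos|apply IHn]. Qed.

Lemma ln_Pfrom a b T q n : forall j, ln (Pfrom a b T q j n) = Lfrom a b T q j n.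
Proof. induction n; intro j; simpl. apply ln_1. rewrite ln_mult; [|apply sj_pos|apply Pfrom_pos]. now rewrite IHn. Qed.

Lemma words_word n : forall w, In w (words n) -> is_word w.
Proof. induction n; simpl; intros w H.
 - destruct H as [H|[]]; subst; constructor.
 - repeat (apply in_app_or in H; destruct H as [H|H]);
   try (apply in_map_iff in H; destruct H as [x [<- Hx]]; constructor; [lia|apply IHn; exact Hx]); simpl in H; contradiction. Qed.

Lemma sumR_app l1 l2 : sumR (l1 ++ l2) = sumR l1 + sumR l2.
Proof. induction l1; simpl. lra. rewrite IHl1. ring. Qed.

Lemma Rpower_1 q : Rpower 1 q = 1.
Proof. unfold Rpower. rewrite ln_1, Rmult_0_r. apply exp_0. Qed.

Lemma pj_pos a b T j e
  (ha : forall i, (1 <= i <= 3)%nat -> 0 < a i < 1)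
  (hb : forall i, (1 <= i <= 3)%nat -> 0 < b i < 1) : (e < 3)%nat -> 0 < pj a b T j e.
Proof. intro He. unfold pj. destruct (excluded_middle_informative _).
 apply ha; lia. apply hb; lia. Qed.

Lemma mu_pos a b T j w
  (ha : forall i, (1 <= i <= 3)%nat -> 0 < a i < 1)
  (hb : forall i, (1 <= i <= 3)%nat -> 0 < b i < 1) : is_word w -> 0 < mu_from a b T j w.
Proof. intro H; revert j; induction H; intro j; simpl. lra.
 apply Rmult_lt_0_compat; [apply pj_pos; auto|apply IHForall]. Qed.

Lemma sum_scal a b T q j e l
  (ha : forall i, (1 <= i <= 3)%nat -> 0 < a i < 1)
  (hb : forall i, (1 <= i <= 3)%nat -> 0 < b i < 1) : (e < 3)%nat -> Forall is_word l ->
  sumR (map (fun x => Rpower (pj a b T j e * mu_from a b T (S j) x) q) l)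
  = Rpower (pj a b T j e) q * sumR (map (fun x => Rpower (mu_from a b T (S j) x) q) l).
Proof. intros He Hl; induction Hl; simpl. ring.
 rewrite IHHl, <- Rpower_mult_distr; [ring|apply pj_pos; auto|apply mu_pos; auto]. Qed.

Lemma words_Forall n : Forall is_word (words n).
Proof. apply Forall_forall. apply words_word. Qed.

Lemma Zsum a b T q n
  (ha : forall i, (1 <= i <= 3)%nat -> 0 < a i < 1)
  (hb : forall i, (1 <= i <= 3)%nat -> 0 < b i < 1) : forall j,
  sumR (map (fun w => Rpower (mu_from a b T j w) q) (words n)) = Pfrom a b T q j n.
Proof. induction n; intro j.
 - simpl. rewrite Rpower_1. ring.
 - change (words (S n)) with (flat_map (fun e => map (cons e) (words n)) [0%nat;1%nat;2%nat]).
   simpl flat_map. rewrite !map_app, !sumR_app, !map_map. simpl mu_from.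
   rewrite !sum_scal; auto using words_Forall.
   rewrite IHn. simpl. unfold sj. ring. Qed.

Lemma nu_mu a b T q w
  (ha : forall i, (1 <= i <= 3)%nat -> 0 < a i < 1)
  (hb : forall i, (1 <= i <= 3)%nat -> 0 < b i < 1) : is_word w -> forall j,
  nu_from a b T q j w = Rpower (mu_from a b T j w) q / Pfrom a b T q j (length w).
Proof. intro H; induction H; intro j; simpl.
 - rewrite Rpower_1. field.
 - rewrite IHForall, <- Rpower_mult_distr; [|apply pj_pos; auto|apply mu_pos; auto].
   pose proof (sj_pos a b T q j). pose proof (Pfrom_pos a b T q (length l) (S j)).
   field. lra. Qed.

Lemma ln3_pos : 0 < ln 3.
Proof. rewrite <- ln_1. apply ln_increasing; lra. Qed.

Lemma tau_eq a b T q n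
  (ha : forall i, (1 <= i <= 3)%nat -> 0 < a i < 1)
  (hb : forall i, (1 <= i <= 3)%nat -> 0 < b i < 1) :
  tau_n a b T q n = Lfrom a b T q 1 n / (INR n * ln 3).
Proof. unfold tau_n, mu. rewrite Zsum by auto. now rewrite ln_Pfrom. Qed.

Lemma rp3 a b T q n
  (ha : forall i, (1 <= i <= 3)%nat -> 0 < a i < 1)
  (hb : forall i, (1 <= i <= 3)%nat -> 0 < b i < 1) : (1 <= n)%nat ->
  Rpower 3 (- (INR n * tau_n a b T q n)) = / Pfrom a b T q 1 n.
Proof. intro Hn. rewrite tau_eq by auto. unfold Rpower.
 assert (0 < INR n) by (apply lt_0_INR; lia). pose proof ln3_pos.
 replace (- (INR n * (Lfrom a b T q 1 n / (INR n * ln 3))) * ln 3) with (- ln (Pfrom a b T q 1 n)).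
 rewrite exp_Ropp, exp_ln; auto using Pfrom_pos.
 rewrite ln_Pfrom. field. lra. Qed.

Lemma nu_formula a b T q w
  (ha : forall i, (1 <= i <= 3)%nat -> 0 < a i < 1)
  (hb : forall i, (1 <= i <= 3)%nat -> 0 < b i < 1) : is_word w -> (1 <= length w)%nat ->
  nu_from a b T q 1 w = Rpower (mu a b T w) q * Rpower 3 (- (INR (length w) * tau_n a b T q (length w))).
Proof. intros Hw Hn. rewrite rp3, nu_mu by auto. reflexivity. Qed.

Lemma compare_bound x n t1 t2 : 0 <= x -> t2 <= t1 ->
  x * Rpower 3 (- (INR n * t1)) <= x * Rpower 3 (- (INR n * t2)).
Proof. intros Hx Ht. apply Rmult_le_compat_l; auto. apply Rle_Rpower. lra.
 pose proof (pos_INR n). nra. Qed.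
Definition SA (a : nat -> R) q := Rpower (a 1%nat) q + Rpower (a 2%nat) q + Rpower (a 3%nat) q.

Lemma sj_a a b T q j : in_a_phase T j -> sj a b T q j = SA a q.
Proof. intro H. unfold sj, pj, SA. destruct (excluded_middle_informative _); [reflexivity|contradiction]. Qed.
Lemma sj_b a b T q j : ~ in_a_phase T j -> sj a b T q j = SA b q.
Proof. intro H. unfold sj, pj, SA. destruct (excluded_middle_informative _); [contradiction|reflexivity]. Qed.

Definition mnv a b q := Rmin (ln (SA a q)) (ln (SA b q)).
Definition mxv a b q := Rmax (ln (SA a q)) (ln (SA b q)).

Lemma sj_bounds a b T q j : mnv a b q <= ln (sj a b T q j) <= mxv a b q.
Proof. unfold mnv, mxv. destruct (classic (in_a_phase T j)) as [H|H].
 - rewrite sj_a by auto. split; [apply Rmin_l|apply Rmax_l].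
 - rewrite sj_b by auto. split; [apply Rmin_r|apply Rmax_r]. Qed.

Lemma Tmono T (hTinc : forall k, (1 <= k)%nat -> (T k < T (S k))%nat) :
  forall i d, (1 <= i)%nat -> (T i <= T (i + d))%nat.
Proof. intros i d Hi; induction d. rewrite Nat.add_0_r; lia.
 rewrite Nat.add_succ_r. specialize (hTinc (i + d)%nat ltac:(lia)). lia. Qed.

Lemma Tmono' T (hTinc : forall k, (1 <= k)%nat -> (T k < T (S k))%nat) :
  forall i i', (1 <= i)%nat -> (i <= i')%nat -> (T i <= T i')%nat.
Proof. intros i i' H1 H2. replace i' with (i + (i' - i))%nat by lia. now apply Tmono. Qed.

Lemma Tge T (hT1 : T 1%nat = 1%nat) (hTinc : forall k, (1 <= k)%nat -> (T k < T (S k))%nat) :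
  forall k, (1 <= k)%nat -> (k <= T k)%nat.
Proof. induction k; intro H. lia. destruct k. lia. specialize (hTinc (S k) ltac:(lia)).
 specialize (IHk ltac:(lia)). lia. Qed.

Lemma Lfrom_le a b T q c n : forall j, (forall i, (i < n)%nat -> ln (sj a b T q (j + i)) <= c) ->
  Lfrom a b T q j n <= INR n * c.
Proof. induction n; intros j H; simpl Lfrom. simpl; lra.
 rewrite S_INR. pose proof (H 0%nat ltac:(lia)). rewrite Nat.add_0_r in H0.
 assert (Lfrom a b T q (S j) n <= INR n * c). { apply IHn. intros i Hi.
  replace (S j + i)%nat with (j + S i)%nat by lia. apply H; lia. } lra. Qed.

Lemma Lfrom_ge a b T q c n : forall j, (forall i, (i < n)%nat -> c <= ln (sj a b T q (j + i))) ->
  INR n * c <= Lfrom a b T q j n.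
Proof. induction n; intros j H; simpl Lfrom. simpl; lra.
 rewrite S_INR. pose proof (H 0%nat ltac:(lia)). rewrite Nat.add_0_r in H0.
 assert (INR n * c <= Lfrom a b T q (S j) n). { apply IHn. intros i Hi.
  replace (S j + i)%nat with (j + S i)%nat by lia. apply H; lia. } lra. Qed.

Lemma Lfrom_split a b T q n1 n2 : forall j,
  Lfrom a b T q j (n1 + n2) = Lfrom a b T q j n1 + Lfrom a b T q (j + n1) n2.
Proof. induction n1; intro j; simpl. rewrite Nat.add_0_r; ring.
 rewrite IHn1. replace (S j + n1)%nat with (j + S n1)%nat by lia. ring. Qed.

Lemma block a b T q (hT1 : T 1%nat = 1%nat) (hTinc : forall k, (1 <= k)%nat -> (T k < T (S k))%nat) :
  forall K, exists i, (K <= i)%nat /\ (1 <= i)%nat /\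
   forall j, (T i <= j < T (S i))%nat -> ln (sj a b T q j) = mnv a b q.
Proof. intro K. unfold mnv. destruct (Rle_or_lt (ln (SA a q)) (ln (SA b q))) as [H|H].
 - exists (2 * (K + 1) - 1)%nat. split; [lia|split; [lia|]]. intros j Hj.
   rewrite sj_a. rewrite Rmin_left; auto.
   exists (K + 1)%nat. split; [lia|]. replace (S (2 * (K + 1) - 1)) with (2 * (K+1))%nat in Hj by lia. exact Hj.
 - exists (2 * (K + 1))%nat. split; [lia|split; [lia|]]. intros j Hj.
   rewrite sj_b. rewrite Rmin_right; lra.
   intros [k [Hk1 Hk2]].
   destruct (Nat.le_gt_cases k (K + 1)).
   + pose proof (Tmono' T hTinc (2 * k) (2 * (K+1)) ltac:(lia) ltac:(lia)). lia.
   + pose proof (Tmono' T hTinc (S (2 * (K+1))) (2 * k - 1) ltac:(lia) ltac:(lia)). lia.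
Qed.
Lemma Key a b T q (hT1 : T 1%nat = 1%nat) (hTinc : forall k, (1 <= k)%nat -> (T k < T (S k))%nat)
  (hTratio : forall M, exists K, forall k, (K <= k)%nat -> (1 <= k)%nat ->
      INR (T (S k)) / INR (T k) > M) :
  forall d, 0 < d -> forall N, exists n, (N <= n)%nat /\ (1 <= n)%nat /\
    Lfrom a b T q 1 n < INR n * (mnv a b q + d).
Proof.
 intros d hd N.
 set (D := mxv a b q - mnv a b q).
 assert (HD : 0 <= D). { unfold D, mxv, mnv. pose proof (Rmin_l (ln (SA a q)) (ln (SA b q))).
   pose proof (Rmax_l (ln (SA a q)) (ln (SA b q))). lra. }
 destruct (hTratio (2 * (D + 1) / d)) as [K HK].
 destruct (block a b T q hT1 hTinc (Nat.max K N)) as [i [Hi1 [Hi2 Hi3]]].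
 pose proof (Tge T hT1 hTinc i Hi2) as Ht1.
 pose proof (Tge T hT1 hTinc (S i) ltac:(lia)) as Ht2.
 pose proof (hTinc i Hi2) as Ht3.
 assert (HR := HK i ltac:(lia) Hi2).
 set (t := T i) in *. set (t' := T (S i)) in *.
 exists (t' - 1)%nat. split; [lia|split; [lia|]].
 replace (t' - 1)%nat with ((t - 1) + (t' - t))%nat by lia.
 rewrite Lfrom_split. replace (1 + (t - 1))%nat with t by lia.
 assert (h1 : Lfrom a b T q 1 (t - 1) <= INR (t - 1) * mxv a b q).
 { apply Lfrom_le. intros; apply sj_bounds. }
 assert (h2 : Lfrom a b T q t (t' - t) <= INR (t' - t) * mnv a b q).
 { apply Lfrom_le. intros k Hk. rewrite Hi3. lra. unfold t, t' in *; lia. }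
 rewrite plus_INR.
 assert (Hle : INR (t - 1) <= INR t) by (apply le_INR; lia).
 assert (h3 : INR (t - 1) * mxv a b q <= INR (t - 1) * mnv a b q + INR t * D).
 { assert (INR (t-1) * D <= INR t * D) by (apply Rmult_le_compat_r; auto).
   unfold D in *. lra. }
 assert (Hsum : INR (t - 1) + INR (t' - t) = INR t' - 1).
 { rewrite <- plus_INR. replace (t - 1 + (t' - t))%nat with (t' - 1)%nat by lia.
   rewrite minus_INR by lia. simpl; ring. }
 assert (HtP : 0 < INR t) by (apply lt_0_INR; lia).
 assert (Ht'2 : 2 <= INR t') by (replace 2 with (INR 2) by (simpl; ring); apply le_INR; lia).
 assert (HX : INR t' > 2 * (D + 1) / d * INR t).
 { replace (INR t') with (INR t' / INR t * INR t) by (field; lra).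
   apply Rmult_lt_compat_r; lra. }
 assert (HX2 : d * INR t' > 2 * (D + 1) * INR t).
 { replace (2 * (D + 1) * INR t) with (d * (2 * (D + 1) / d * INR t)) by (field; lra).
   apply Rmult_lt_compat_l; lra. }
 assert (Hc : (INR t' - 2) * d >= 0) by (apply Rle_ge, Rmult_le_pos; lra).
 assert (Hfin : INR t * D < (INR t' - 1) * d) by nra.
 rewrite Hsum in *. 
 assert (INR (t - 1) * mnv a b q + INR (t' - t) * mnv a b q = (INR t' - 1) * mnv a b q).
 { rewrite <- Hsum. ring. }
 rewrite <- Hsum. nra.
Qed.

Lemma tau_low_le a b T q tau_low
  (ha : forall i, (1 <= i <= 3)%nat -> 0 < a i < 1)
  (hb : forall i, (1 <= i <= 3)%nat -> 0 < b i < 1)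
  (hT1 : T 1%nat = 1%nat) (hTinc : forall k, (1 <= k)%nat -> (T k < T (S k))%nat)
  (hTratio : forall M, exists K, forall k, (K <= k)%nat -> (1 <= k)%nat ->
      INR (T (S k)) / INR (T k) > M)
  (htau_low : is_liminf (tau_n a b T q) tau_low) :
  forall m, (1 <= m)%nat -> tau_low <= tau_n a b T q m.
Proof.
 pose proof ln3_pos as L3.
 assert (lower : forall n, (1 <= n)%nat -> mnv a b q / ln 3 <= tau_n a b T q n).
 { intros n Hn. rewrite tau_eq by auto.
   assert (0 < INR n) by (apply lt_0_INR; lia).
   assert (INR n * mnv a b q <= Lfrom a b T q 1 n) by (apply Lfrom_ge; intros; apply sj_bounds).
   replace (mnv a b q / ln 3) with (INR n * mnv a b q / (INR n * ln 3)) by (field; lra).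
   unfold Rdiv. apply Rmult_le_compat_r; auto. left; apply Rinv_0_lt_compat; nra. }
 assert (upper : tau_low <= mnv a b q / ln 3).
 { apply Rnot_lt_le; intro H.
   set (eps := (tau_low - mnv a b q / ln 3) / 2).
   assert (He : eps > 0) by (unfold eps; lra).
   destruct (htau_low eps He) as [[N HN] _].
   destruct (Key a b T q hT1 hTinc hTratio (eps * ln 3) ltac:(nra) N) as [n [Hn1 [Hn2 Hn3]]].
   specialize (HN n Hn1). rewrite tau_eq in HN by auto.
   assert (0 < INR n) by (apply lt_0_INR; lia).
   assert (Lfrom a b T q 1 n / (INR n * ln 3) < INR n * (mnv a b q + eps * ln 3) / (INR n * ln 3)).
   { unfold Rdiv. apply Rmult_lt_compat_r; auto. apply Rinv_0_lt_compat; nra. }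
   replace (INR n * (mnv a b q + eps * ln 3) / (INR n * ln 3)) with (mnv a b q / ln 3 + eps) in H1
     by (field; lra).
   unfold eps in *. lra. }
 intros m Hm. specialize (lower m Hm). lra.
Qed.
Fixpoint iterseq (g : nat -> nat -> nat) (k : nat) : nat :=
  match k with O => g 1%nat 0%nat | S k' => g (S (iterseq g k')) k end.

Theorem lemma6 (a b : nat -> R) (T : nat -> nat) (q : R)
  (ha : forall i, (1 <= i <= 3)%nat -> 0 < a i < 1)
  (hb : forall i, (1 <= i <= 3)%nat -> 0 < b i < 1)
  (hsa : a 1%nat + a 2%nat + a 3%nat = 1)
  (hsb : b 1%nat + b 2%nat + b 3%nat = 1)
  (hT1 : T 1%nat = 1%nat)
  (hTinc : forall k, (1 <= k)%nat -> (T k < T (S k))%nat)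
  (hTratio : forall M, exists K, forall k, (K <= k)%nat -> (1 <= k)%nat ->
      INR (T (S k)) / INR (T k) > M)
  (tau tau_low : R)
  (htau : is_limsup (tau_n a b T q) tau)
  (htau_low : is_liminf (tau_n a b T q) tau_low) :
  exists (nu : list nat -> R) (nk : nat -> nat),
    cyl_prob_measure nu /\
    (forall k, (nk k < nk (S k))%nat) /\
    (forall (n : nat) (w : list nat), (1 <= n)%nat -> is_word w -> length w = n ->
       nu w <= Rpower (mu a b T w) q * Rpower 3 (- (INR n * tau_low))) /\
    (forall eps, eps > 0 -> exists k0, forall k (w : list nat), (k0 <= k)%nat ->
       is_word w -> length w = nk k ->
       nu w <= Rpower (mu a b T w) q * Rpower 3 (- (INR (nk k) * (tau - eps)))).
Proof.
 assert (hg : forall N k, exists n, (n >= N)%nat /\ tau_n a b T q n > tau - / (INR k + 1)).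
 { intros N k. assert (0 < INR k + 1) by (pose proof (pos_INR k); lra).
   destruct (htau (/ (INR k + 1)) ltac:(apply Rlt_gt, Rinv_0_lt_compat; lra)) as [_ H2].
   apply H2. }
 pose (g := fun N k => proj1_sig (constructive_indefinite_description _ (hg N k))).
 assert (gspec : forall N k, (g N k >= N)%nat /\ tau_n a b T q (g N k) > tau - / (INR k + 1)).
 { intros N k. unfold g. apply (proj2_sig (constructive_indefinite_description _ (hg N k))). }
 assert (nk1 : forall k, (1 <= iterseq g k)%nat).
 { intro k; destruct k as [|k]; simpl; [destruct (gspec 1%nat 0%nat); lia | destruct (gspec (S (iterseq g k)) (S k)); lia]. }
 exists (nu_from a b T q 1), (iterseq g).
 split; [|split; [|split]].
 - split; [reflexivity|split].
   + intros; apply nu_nonneg.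
   + intros; apply nu_add.
 - intro k. simpl. destruct (gspec (S (iterseq g k)) (S k)). lia.
 - intros n w Hn Hw Hl. subst n. rewrite nu_formula by auto.
   apply compare_bound. left; apply Rpower_pos.
   apply (tau_low_le a b T q tau_low ha hb hT1 hTinc hTratio htau_low); auto.
 - intros eps Heps. destruct (archimed_cor1 eps Heps) as [k0 [Hk0 Hk0']].
   exists k0. intros k w Hk Hw Hl.
   rewrite nu_formula by (auto; rewrite Hl; auto). rewrite Hl.
   apply compare_bound. left; apply Rpower_pos.
   assert (tau_n a b T q (iterseq g k) > tau - / (INR k + 1)).
   { destruct k; simpl; [apply (gspec 1%nat 0%nat)|apply gspec]. }
   assert (/ (INR k + 1) < / INR k0).
   { apply Rinv_lt_contravar. apply Rmult_lt_0_compat. apply lt_0_INR; lia.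
     pose proof (pos_INR k); lra. apply le_INR in Hk. lra. }
   lra.
Qed.
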